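(* Let $\mathcal H=\mathbb C^4$ with orthonormal basis $|0\rangle,|1\rangle,|2\rangle,|3\rangle$, let $0<p<\tfrac12$, $|\nu^\pm\rangle=\tfrac12(\pm|0\rangle+|1\rangle\pm|2\rangle+|3\rangle)$, and $\rho_1=p|0\rangle\langle0|+(1-p)|1\rangle\langle1|$, $\rho_2=p|\nu^+\rangle\langle\nu^+|+(1-p)|\nu^-\rangle\langle\nu^-|$. Then $\rho_1$ and $\rho_2$ have the same spectrum and all Jordan angles between $\operatorname{supp}\rho_1$ and $\operatorname{supp}\rho_2$ are equal, but the set $\{\rho_1,\rho_2\}$ is not essentially pure.
   Context: $\operatorname{supp}\rho$ is the orthogonal complement of the kernel of $\rho$; Jordan angles are the principal (canonical) angles between two subspaces. A set $\mathcal M$ of density operators on $\mathcal H$ is essentially pure if there exist finite-dimensional Hilbert spaces $\mathcal H_C,\mathcal H_A,\mathcal H_B$ with $\mathcal H\otimes\mathcal H_C\cong\mathcal H_A\otimes\mathcal H_B$, density operators $\sigma_B$ on $\mathcal H_B$, $\omega_C$ on $\mathcal H_C$ and a unitary $U$ (from $\mathcal H_A\otimes\mathcal H_B$ to $\mathcal H\otimes\mathcal H_C$) such that $\{\rho\otimes\omega_C\mid\rho\in\mathcal M\}\subseteq\{U(|\phi\rangle\langle\phi|\otimes\sigma_B)U^\dagger\mid|\phi\rangle\in\mathcal H_A,\ \|\phi\|=1\}$. *)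

(* Defs.v *)
From HB Require Import structures.
From mathcomp Require Import all_boot all_order all_algebra.
From mathcomp Require Import mxtens complex reals.
Set Implicit Arguments. Unset Strict Implicit. Unset Printing Implicit Defensive.
Import Order.TTheory GRing.Theory Num.Theory.
Local Open Scope ring_scope.
Local Open Scope sesquilinear_scope.

Section QuantumDefs.
Variable C : numClosedFieldType.

Definition adj {m n} (A : 'M[C]_(m, n)) : 'M[C]_(n, m) := A ^t*.

Definition hermitian {n} (A : 'M[C]_n) : Prop := adj A = A.

Definition psd {n} (A : 'M[C]_n) : Prop :=
  hermitian A /\ forall v : 'cV[C]_n, 0 <= (adj v *m A *m v) 0 0.

Definition density {n} (A : 'M[C]_n) : Prop := psd A /\ \tr A = 1.

Definition unit_vector {n} (v : 'cV[C]_n) : Prop := adj v *m v = 1%:M.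

Definition ketbra {n} (v : 'cV[C]_n) : 'M[C]_n := v *m adj v.

(* a unitary map C^n -> C^m  (forces m = n) *)
Definition unitary_map {m n} (U : 'M[C]_(m, n)) : Prop :=
  U *m adj U = 1%:M /\ adj U *m U = 1%:M.

Definition supp {n} (rho : 'M[C]_n) : 'cV[C]_n -> Prop :=
  fun v => forall w : 'cV[C]_n, rho *m w = 0 -> adj w *m v = 0.

Definition onb_of {n k} (Q : 'M[C]_(n, k)) (S : 'cV[C]_n -> Prop) : Prop :=
  adj Q *m Q = 1%:M /\ forall v, S v <-> exists x : 'cV[C]_k, v = Q *m x.

(* Jordan (principal) angles between two k-dimensional subspaces S, T:
   if QS, QT are orthonormal bases, the cosines of the Jordan angles are the
   singular values of G := QS^* QT, i.e. their squares are the eigenvalues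
   (with multiplicity) of G G^*.  "All Jordan angles are equal" means all these
   eigenvalues coincide, i.e. the characteristic polynomial of G G^* is
   (X - c)^k.  (Angles lie in [0, pi/2], where cos^2 is injective.) *)
Definition all_jordan_angles_equal {n} (S T : 'cV[C]_n -> Prop) : Prop :=
  exists k (QS QT : 'M[C]_(n, k)),
    onb_of QS S /\ onb_of QT T /\
    exists c : C, char_poly ((adj QS *m QT) *m adj (adj QS *m QT))
                  = ('X - c%:P) ^+ k.

(* Essential purity of a set M of density operators on C^n:
   H = C^n, H_C = C^dC, H_A = C^dA, H_B = C^dB with H (x) H_C ~ H_A (x) H_B,
   density operators sigma_B, omega_C and a unitary U : H_A (x) H_B -> H (x) H_C
   with  rho (x) omega_C = U (|phi><phi| (x) sigma_B) U^*  for every rho in M,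
   for some unit vector phi in H_A (depending on rho). *)
Definition essentially_pure {n} (M : 'M[C]_n -> Prop) : Prop :=
  exists (dC dA dB : nat) (sigmaB : 'M[C]_dB) (omegaC : 'M[C]_dC)
         (U : 'M[C]_(n * dC, dA * dB)),
    (n * dC = dA * dB)%N /\ density sigmaB /\ density omegaC /\ unitary_map U /\
    forall rho, M rho ->
      exists phi : 'cV[C]_dA, unit_vector phi /\
        rho *t omegaC = U *m (ketbra phi *t sigmaB) *m adj U.

End QuantumDefs.

Section Example.
Variable R : realType.
Local Notation C := R[i].
Local Open Scope complex_scope.

Definition ket (j : 'I_4) : 'cV[C]_4 := delta_mx j 0.

Definition nu_plus : 'cV[C]_4 :=
  (1 / 2) *: (ket 0 + ket 1 + ket 2 + ket 3).
Definition nu_minus : 'cV[C]_4 :=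
  (1 / 2) *: (- ket 0 + ket 1 - ket 2 + ket 3).

Definition rho1 (p : R) : 'M[C]_4 :=
  p%:C *: ketbra (ket 0) + (1 - p)%:C *: ketbra (ket 1).
Definition rho2 (p : R) : 'M[C]_4 :=
  p%:C *: ketbra nu_plus + (1 - p)%:C *: ketbra nu_minus.

End Example.

(* Main.v *)
Require Import Defs.
From HB Require Import structures.
From mathcomp Require Import all_boot all_order all_algebra.
From mathcomp Require Import mxtens complex reals.
From mathcomp Require Import ring lra.
Import Order.TTheory GRing.Theory Num.Theory.
Local Open Scope ring_scope.

Set Implicit Arguments.
Unset Strict Implicit.

Definition k0 : 'I_4 := @Ordinal 4 0 isT.
Definition k1 : 'I_4 := @Ordinal 4 1 isT.
Definition k2 : 'I_4 := @Ordinal 4 2 isT.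
Definition k3 : 'I_4 := @Ordinal 4 3 isT.
Definition j0 : 'I_2 := @Ordinal 2 0 isT.
Definition j1 : 'I_2 := @Ordinal 2 1 isT.

Lemma ord4_cases (a : 'I_4) : a = k0 \/ a = k1 \/ a = k2 \/ a = k3.
Proof.
case: a => [[|[|[|[|a]]]] Ha] //.
- by left; apply: val_inj.
- by right; left; apply: val_inj.
- by right; right; left; apply: val_inj.
- by right; right; right; apply: val_inj.
Qed.

Lemma ord2_cases (a : 'I_2) : a = j0 \/ a = j1.
Proof.
case: a => [[|[|a]] Ha] //.
- by left; apply: val_inj.
- by right; apply: val_inj.
Qed.

Lemma ord1_0 (c : 'I_1) : c = 0.
Proof. by case: c => [[|c] Hc] //; apply: val_inj. Qed.

Lemma eq_ordE n (a b : 'I_n) : (a == b) = eqn a b.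
Proof. by []. Qed.

Ltac c4 a := case: (ord4_cases a) => [->|[->|[->|->]]].
Ltac c2 a := case: (ord2_cases a) => [->|->].
Section Gen.
Variable C : numClosedFieldType.

Lemma adjE m n (A : 'M[C]_(m,n)) a b : adj A a b = (A b a)^*.
Proof. by rewrite /adj !mxE. Qed.

Lemma adj_mul m n k (A : 'M[C]_(m,n)) (B : 'M[C]_(n,k)) :
  adj (A *m B) = adj B *m adj A.
Proof. by rewrite /adj trmx_mul map_mxM. Qed.

Lemma AAadj0 m n (A : 'M[C]_(m,n)) : A *m adj A = 0 -> A = 0.
Proof.
move=> H; apply/matrixP => a b; rewrite mxE.
have := congr1 (fun M : 'M[C]_m => M a a) H; rewrite !mxE.
under eq_bigr do rewrite adjE.
move/eqP; rewrite psumr_eq0 => [/allP/(_ b)|]; last by move=> *; exact: mul_conjC_ge0.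
by rewrite mem_index_enum mul_conjC_eq0 => /(_ isT) /eqP.
Qed.

Lemma herm_cube_neq0 n (W : 'M[C]_n) : adj W = W -> W != 0 -> W *m W *m W != 0.
Proof.
move=> hW nz; apply/negP => /eqP H3.
have W2 : W *m W = 0.
  apply: AAadj0; rewrite adj_mul hW mulmxA.
  by rewrite H3 mul0mx.
move/eqP: nz; apply; apply: AAadj0; by rewrite hW.
Qed.

Lemma ketbra3 n (u v : 'cV[C]_n) :
  ketbra u *m ketbra v *m ketbra u = ((adj u *m v) 0 0 * (adj v *m u) 0 0) *: ketbra u.
Proof.
rewrite /ketbra.
have -> : u *m adj u *m (v *m adj v) *m (u *m adj u)
   = u *m (adj u *m v) *m (adj v *m u) *m adj u by rewrite !mulmxA.
set a := (adj u *m v) 0 0; set b := (adj v *m u) 0 0.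
rewrite [adj u *m v]mx11_scalar [adj v *m u]mx11_scalar -/a -/b.
by rewrite mul_mx_scalar mul_mx_scalar -!scalemxAl scalerA mulrC.
Qed.

Lemma conj_prod N M (U : 'M[C]_(N, M)) (A B : 'M[C]_M) :
  adj U *m U = 1%:M -> (U *m A *m adj U) *m (U *m B *m adj U) = U *m (A *m B) *m adj U.
Proof.
move=> hU; rewrite !mulmxA -[U *m A *m adj U *m U]mulmxA hU mulmx1.
done.
Qed.

Lemma scale_tens m n k l (s : C) (A : 'M[C]_(m,n)) (B : 'M[C]_(k,l)) :
  (s *: A) *t B = s *: (A *t B).
Proof. by apply/matrixP => a b; rewrite !mxE mulrA. Qed.

Lemma ketbra_cube n (u : 'cV[C]_n) : unit_vector u ->
  ketbra u *m ketbra u *m ketbra u = ketbra u.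
Proof. by move=> hu; rewrite ketbra3 hu mxE mulr1n mul1r scale1r. Qed.

Lemma not_ep_gen n (r1 r2 : 'M[C]_n) (i j : 'I_n) :
  (r1 *m r2 *m r1) i j != 0 -> (r1 *m r1 *m r1) i j = 0 ->
  ~ essentially_pure (fun rho => rho = r1 \/ rho = r2).
Proof.
move=> Hne Heq.
case=> dC [dA [dB [sig [om [U [_ [_ [[[hermom _] trom] [[_ hU] H]]]]]]]]].
have [phi1 [u1 E1]] := H r1 (or_introl erefl).
have [phi2 [_ E2]] := H r2 (or_intror erefl).
have omnz : om != 0.
  by apply/eqP => om0; move: trom; rewrite om0 mxtrace0 => /eqP; rewrite eq_sym oner_eq0.
have Wnz := herm_cube_neq0 hermom omnz.
set W := om *m om *m om in Wnz.
case/boolP: [exists a, exists b, W a b != 0] => [/existsP [a /existsP [b Wab]] | /existsPn Hall]; last first.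
  have W0 : W = 0.
    apply/matrixP=> a b.
    have := Hall a; rewrite negb_exists => /forallP /(_ b). by rewrite negbK => /eqP ->; rewrite mxE.
  by move: Wnz; rewrite W0 eqxx.
set s := (adj phi1 *m phi2) 0 0 * (adj phi2 *m phi1) 0 0.
have key : (r1 *m r2 *m r1) *t W = s *: ((r1 *m r1 *m r1) *t W).
  rewrite /W -!tensmx_mul E1 E2 !conj_prod // !tensmx_mul ketbra3 ketbra_cube //.
  by rewrite scale_tens -scalemxAr -scalemxAl.
have := congr1 (fun M : 'M[C]_(n * dC) => M (mxtens_index (i, a)) (mxtens_index (j, b))) key.
rewrite /= tensmxE [in RHS]mxE tensmxE Heq mul0r mulr0 => /eqP.
by rewrite mulf_eq0 (negPf Hne) (negPf Wab).
Qed.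

Lemma combE n (a b : C) (u v : 'cV[C]_n) i j :
  (a *: ketbra u + b *: ketbra v) i j = a * (u i 0 * (u j 0)^*) + b * (v i 0 * (v j 0)^*).
Proof. by rewrite !mxE !big_ord1 !adjE. Qed.

Lemma mulE4 m n (A : 'M[C]_(m,4)) (B : 'M[C]_(4,n)) a b :
  (A *m B) a b = A a k0 * B k0 b + A a k1 * B k1 b + A a k2 * B k2 b + A a k3 * B k3 b.
Proof.
rewrite mxE !big_ord_recl big_ord0 addr0 !addrA.
have -> : lift ord0 (lift ord0 (lift ord0 ord0)) = k3 :> 'I_4 by apply: val_inj.
have -> : lift ord0 (lift ord0 ord0) = k2 :> 'I_4 by apply: val_inj.
have -> : lift ord0 ord0 = k1 :> 'I_4 by apply: val_inj.
by have -> : ord0 = k0 :> 'I_4 by apply: val_inj.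
Qed.

Lemma mulE2 m n (A : 'M[C]_(m,2)) (B : 'M[C]_(2,n)) a b :
  (A *m B) a b = A a j0 * B j0 b + A a j1 * B j1 b.
Proof.
rewrite mxE !big_ord_recl big_ord0 addr0.
have -> : lift ord0 ord0 = j1 :> 'I_2 by apply: val_inj.
by have -> : ord0 = j0 :> 'I_2 by apply: val_inj.
Qed.

Lemma char_poly_sim n (A V W : 'M[C]_n) :
  W *m V = 1%:M -> char_poly (V *m A *m W) = char_poly A.
Proof.
move=> WV; have VW := mulmx1C WV.
pose f := map_mx (@polyC C).
have e : f n n V *m 'X%:M *m f n n W = 'X%:M.
  by rewrite mul_mx_scalar -scalemxAl -map_mxM VW map_mx1 scalemx1.
have cm : char_poly_mx (V *m A *m W) = f n n V *m char_poly_mx A *m f n n W.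
  by rewrite /char_poly_mx mulmxBr mulmxBl e !map_mxM.
rewrite /char_poly cm !det_mulmx [LHS]mulrC mulrA -det_mulmx -map_mxM WV map_mx1 det1.
by rewrite mul1r.
Qed.

End Gen.
Section Ex.
Variable R : realType.
Local Notation C := R[i].

Definition sg (n : nat) : C := if odd n then 1 else -1.

Lemma cfix_half : ((1/2 : C))^* = 1/2.
Proof. by apply: geC0_conj; rewrite divr_ge0 ?ler01 ?ler0n. Qed.
Lemma cfix_mhalf : ((-1/2 : C))^* = -1/2.
Proof.
rewrite mulNr; apply: (@eq_trans _ _ (- (1/2)^*)); first exact: rmorphN.
by congr (- _); apply: geC0_conj; rewrite divr_ge0 ?ler01 ?ler0n.
Qed.
Lemma cfix0 : (0 : C)^* = 0. Proof. exact: rmorph0. Qed.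
Lemma cfix1 : (1 : C)^* = 1. Proof. exact: rmorph1. Qed.
Lemma cfixm1 : (-1 : C)^* = -1.
Proof. apply: (@eq_trans _ _ (- 1^*)); first exact: rmorphN. by rewrite cfix1. Qed.

Ltac cfix := first [exact: cfix_half | exact: cfix_mhalf | exact: cfix0 | exact: cfix1 | exact: cfixm1].

Lemma nupE (k : 'I_4) : nu_plus R k 0 = 1/2.
Proof.
rewrite /nu_plus /ket !mxE; case: k => [[|[|[|[|k]]]] Hk] //=; ring.
Qed.

Lemma numE (k : 'I_4) : nu_minus R k 0 = sg k / 2.
Proof.
rewrite /nu_minus /ket !mxE /sg; case: k => [[|[|[|[|k]]]] Hk] //=; ring.
Qed.

Lemma nupC (k : 'I_4) : (nu_plus R k 0)^* = 1/2.
Proof. rewrite nupE; cfix. Qed.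
Lemma numC (k : 'I_4) : (nu_minus R k 0)^* = sg k / 2.
Proof. rewrite numE; c4 k; cfix. Qed.

Variable p : R.
Local Notation P := (p%:C)%C.
Local Notation Q := ((1 - p)%:C)%C.

Definition r1f (a b : nat) : C :=
  match a, b with 0, 0 => P | 1, 1 => Q | _, _ => 0 end.

Lemma rho1E a b : rho1 p a b = r1f a b.
Proof.
rewrite /rho1 combE /ket !mxE /r1f.
case: a => [[|[|[|[|a]]]] Ha] //; case: b => [[|[|[|[|b]]]] Hb] //=;
  rewrite ?rmorph1 ?rmorph0; ring.
Qed.

Lemma rho2E a b : rho2 p a b = (P + Q * sg a * sg b) / 4.
Proof.
rewrite /rho2 combE nupC numC nupE numE.
rewrite /sg.
case: a => [[|[|[|[|a]]]] Ha] //; case: b => [[|[|[|[|b]]]] Hb] //=; field; done.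
Qed.

Ltac cb := cbn [r1f sg nat_of_ord k0 k1 k2 k3 j0 j1 odd negb].

Lemma M01 : (rho1 p *m rho2 p *m rho1 p) k0 k1 = P * ((P - Q)/4) * Q.
Proof.
rewrite !mulE4.
move: (rho1E) (rho2E); move: (rho1 p) (rho2 p) => A B E1 E2.
rewrite !E1 !E2; cb; ring.
Qed.

Lemma M01' : (rho1 p *m rho1 p *m rho1 p) k0 k1 = 0.
Proof.
rewrite !mulE4.
move: (rho1E); move: (rho1 p) => A E1.
rewrite !E1; cb; ring.
Qed.

Hypothesis hp0 : 0 < p.
Hypothesis hp1 : p < 1 / 2.

Lemma Pnz : P != 0.
Proof. by apply/eqP => /(congr1 (@complex.Re R)) /= h; move: hp0; rewrite h ltxx. Qed.
Lemma Qnz : Q != 0.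
Proof. apply/eqP => /(congr1 (@complex.Re R)) /= h. have hh : (1:R) - p = 0 := h. move: hp0 hp1 hh => ? ? ?; lra. Qed.
Lemma PQnz : P - Q != 0.
Proof. rewrite subr_eq0; apply/eqP => /(congr1 (@complex.Re R)) /= h. have hh : p = (1:R) - p := h. move: hp0 hp1 hh => ? ? ?; lra. Qed.

Lemma not_ep : ~ essentially_pure (fun rho => rho = rho1 p \/ rho = rho2 p).
Proof.
apply: (@not_ep_gen _ _ _ _ k0 k1); last exact: M01'.
rewrite M01 !mulf_neq0 ?Pnz ?Qnz ?PQnz //.
by rewrite invr_eq0 pnatr_eq0.
Qed.

Definition vf (a b : nat) : C :=
  match b with
  | 0 => 1/2
  | 1 => sg a / 2
  | 2 => match a with 0 => 1 | 2 => -1 | _ => 0 end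
  | _ => match a with 1 => 1 | 3 => -1 | _ => 0 end
  end.
Definition wf (a b : nat) : C :=
  vf b a * (match a with 0 | 1 => 1 | _ => 1/2 end).

Definition Vm : 'M[C]_4 := \matrix_(a, b) vf a b.
Definition Wm : 'M[C]_4 := \matrix_(a, b) wf a b.

Ltac cb2 := cbn [r1f sg vf wf nat_of_ord k0 k1 k2 k3 j0 j1 odd negb eqn nat_of_bool].

Lemma WV : Wm *m Vm = 1%:M.
Proof.
apply/matrixP => a b; rewrite mulE4 !mxE eq_ordE.
rewrite /wf; c4 a; c4 b; cb2; field; done.
Qed.

Lemma rho2V : rho2 p *m Vm = Vm *m rho1 p.
Proof.
move: (rho1E) (rho2E); move: (rho1 p) (rho2 p) => A B E1 E2.
apply/matrixP => a b; rewrite !mulE4 !E1 !E2 !mxE.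
c4 a; c4 b; cb2; field; done.
Qed.

Lemma charE : char_poly (rho1 p) = char_poly (rho2 p).
Proof.
have -> : rho2 p = Vm *m rho1 p *m Wm.
  by rewrite -rho2V -mulmxA (mulmx1C WV) mulmx1.
by rewrite char_poly_sim // WV.
Qed.
Definition qsf (a b : nat) : C :=
  match a, b with 0, 0 => 1 | 1, 1 => 1 | _, _ => 0 end.
Definition qtf (a b : nat) : C :=
  match b with 0 => 1/2 | _ => sg a / 2 end.
Definition QS : 'M[C]_(4, 2) := \matrix_(a, b) qsf a b.
Definition QT : 'M[C]_(4, 2) := \matrix_(a, b) qtf a b.
Definition u0f (a : nat) : C := match a with 0 => 1 | 2 => -1 | _ => 0 end.
Definition u1f (a : nat) : C := match a with 1 => 1 | 3 => -1 | _ => 0 end.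
Definition e2f (a : nat) : C := match a with 2 => 1 | _ => 0 end.
Definition e3f (a : nat) : C := match a with 3 => 1 | _ => 0 end.
Definition U0 : 'cV[C]_4 := \matrix_(a, b) u0f a.
Definition U1 : 'cV[C]_4 := \matrix_(a, b) u1f a.
Definition E2 : 'cV[C]_4 := \matrix_(a, b) e2f a.
Definition E3 : 'cV[C]_4 := \matrix_(a, b) e3f a.

Ltac cb3 := cbn [r1f sg vf wf qsf qtf u0f u1f e2f e3f nat_of_ord k0 k1 k2 k3 j0 j1 odd negb eqn nat_of_bool].

Lemma QSC a b : (QS a b)^* = QS a b.
Proof. rewrite mxE; c4 a; c2 b; cfix. Qed.
Lemma QTC a b : (QT a b)^* = QT a b.
Proof. rewrite mxE; c4 a; c2 b; cfix. Qed.
Lemma U0C a b : (U0 a b)^* = U0 a b.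
Proof. rewrite mxE; c4 a; cfix. Qed.
Lemma U1C a b : (U1 a b)^* = U1 a b.
Proof. rewrite mxE; c4 a; cfix. Qed.
Lemma E2C a b : (E2 a b)^* = E2 a b.
Proof. rewrite mxE; c4 a; cfix. Qed.
Lemma E3C a b : (E3 a b)^* = E3 a b.
Proof. rewrite mxE; c4 a; cfix. Qed.

Lemma QS_onb : adj QS *m QS = 1%:M.
Proof.
apply/matrixP => a b; rewrite mulE4 !adjE !QSC !mxE eq_ordE.
c2 a; c2 b; cb3; field; done.
Qed.

Lemma QT_onb : adj QT *m QT = 1%:M.
Proof.
apply/matrixP => a b; rewrite mulE4 !adjE !QTC !mxE eq_ordE.
c2 a; c2 b; cb3; field; done.
Qed.
Lemma supp1 v : supp (rho1 p) v <-> exists x : 'cV[C]_2, v = QS *m x.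
Proof.
rewrite /supp; move: (rho1E); move: (rho1 p) => A E1.
split.
- move=> H.
  have AE2 : A *m E2 = 0.
    by apply/matrixP => a b; rewrite mulE4 !E1 !mxE; c4 a; cb3; ring.
  have AE3 : A *m E3 = 0.
    by apply/matrixP => a b; rewrite mulE4 !E1 !mxE; c4 a; cb3; ring.
  have h2 : v k2 0 = 0.
    have e : (adj E2 *m v) 0 0 = v k2 0.
      by rewrite mulE4 !adjE !E2C !mxE; cb3; ring.
    by rewrite (H _ AE2) mxE in e; rewrite -e.
  have h3 : v k3 0 = 0.
    have e : (adj E3 *m v) 0 0 = v k3 0.
      by rewrite mulE4 !adjE !E3C !mxE; cb3; ring.
    by rewrite (H _ AE3) mxE in e; rewrite -e.
  exists (\matrix_(b < 2, c < 1) (match nat_of_ord b with 0 => v k0 0 | _ => v k1 0 end)).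
  apply/matrixP => a c; rewrite mulE2 !mxE (ord1_0 c); c4 a; cb3;
    [ring | ring | rewrite h2; ring | rewrite h3; ring].
- move=> [x ->] w Hw.
  have e0 : (A *m w) k0 0 = P * w k0 0 by rewrite mulE4 !E1; cb3; ring.
  have e1 : (A *m w) k1 0 = Q * w k1 0 by rewrite mulE4 !E1; cb3; ring.
  rewrite Hw mxE in e0; rewrite Hw mxE in e1.
  have w0 : w k0 0 = 0.
    by move/esym/eqP: e0; rewrite mulf_eq0 (negPf Pnz) => /eqP.
  have w1 : w k1 0 = 0.
    by move/esym/eqP: e1; rewrite mulf_eq0 (negPf Qnz) => /eqP.
  apply/matrixP => a c; rewrite (ord1_0 a) (ord1_0 c).
  have e : (adj w *m (QS *m x)) 0 0 = (w k0 0)^* * x j0 0 + (w k1 0)^* * x j1 0.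
    by rewrite mulE4 !mulE2 !adjE !mxE; cb3; ring.
  by rewrite e w0 w1 [RHS]mxE !rmorph0 !mul0r addr0.
Qed.
Lemma supp2 v : supp (rho2 p) v <-> exists x : 'cV[C]_2, v = QT *m x.
Proof.
rewrite /supp; move: (rho2E); move: (rho2 p) => B E2.
split.
- move=> H.
  have BU0 : B *m U0 = 0.
    by apply/matrixP => a b; rewrite mulE4 !E2 !mxE; c4 a; cb3; field.
  have BU1 : B *m U1 = 0.
    by apply/matrixP => a b; rewrite mulE4 !E2 !mxE; c4 a; cb3; field.
  have h02 : v k2 0 = v k0 0.
    have e : (adj U0 *m v) 0 0 = v k0 0 - v k2 0.
      by rewrite mulE4 !adjE !U0C !mxE; cb3; ring.
    rewrite (H _ BU0) mxE in e.
    by apply/eqP; rewrite eq_sym -subr_eq0 -e.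
  have h13 : v k3 0 = v k1 0.
    have e : (adj U1 *m v) 0 0 = v k1 0 - v k3 0.
      by rewrite mulE4 !adjE !U1C !mxE; cb3; ring.
    rewrite (H _ BU1) mxE in e.
    by apply/eqP; rewrite eq_sym -subr_eq0 -e.
  exists (\matrix_(b < 2, c < 1)
     (match nat_of_ord b with 0 => v k0 0 + v k1 0 | _ => v k1 0 - v k0 0 end)).
  apply/matrixP => a c; rewrite mulE2 !mxE (ord1_0 c); c4 a; cb3;
    [field | field | rewrite h02; field | rewrite h13; field]; done.
- move=> [x ->] w Hw.
  have s1 : (B *m w) k0 0 + (B *m w) k1 0
      = P / 2 * (w k0 0 + w k1 0 + w k2 0 + w k3 0).
    by rewrite !mulE4 !E2; cb3; field.
  have s2 : (B *m w) k1 0 - (B *m w) k0 0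
      = Q / 2 * (- w k0 0 + w k1 0 - w k2 0 + w k3 0).
    by rewrite !mulE4 !E2; cb3; field.
  rewrite Hw !mxE addr0 in s1; rewrite Hw !mxE subrr in s2.
  have S1 : w k0 0 + w k1 0 + w k2 0 + w k3 0 = 0.
    move/esym/eqP: s1; rewrite mulf_eq0 mulf_eq0 (negPf Pnz) invr_eq0 pnatr_eq0 /=.
    by move/eqP.
  have S2 : - w k0 0 + w k1 0 - w k2 0 + w k3 0 = 0.
    move/esym/eqP: s2; rewrite mulf_eq0 mulf_eq0 (negPf Qnz) invr_eq0 pnatr_eq0 /=.
    by move/eqP.
  have h2 : w k2 0 = - w k0 0.
    apply/eqP; rewrite -addr_eq0; apply/eqP.
    transitivity ((w k0 0 + w k1 0 + w k2 0 + w k3 0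
                   - (- w k0 0 + w k1 0 - w k2 0 + w k3 0)) / 2); first by field.
    by rewrite S1 S2 subrr mul0r.
  have h3 : w k3 0 = - w k1 0.
    apply/eqP; rewrite -addr_eq0; apply/eqP.
    transitivity ((w k0 0 + w k1 0 + w k2 0 + w k3 0
                   + (- w k0 0 + w k1 0 - w k2 0 + w k3 0)) / 2); first by field.
    by rewrite S1 S2 addr0 mul0r.
  have c2 : (w k2 0)^* = - (w k0 0)^* by rewrite h2; exact: rmorphN.
  have c3 : (w k3 0)^* = - (w k1 0)^* by rewrite h3; exact: rmorphN.
  apply/matrixP => a c; rewrite (ord1_0 a) (ord1_0 c).
  have e : (adj w *m (QT *m x)) 0 0 =
    ((w k0 0)^* + (w k1 0)^* + (w k2 0)^* + (w k3 0)^*) / 2 * x j0 0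
    + (- (w k0 0)^* + (w k1 0)^* - (w k2 0)^* + (w k3 0)^*) / 2 * x j1 0.
    by rewrite mulE4 !mulE2 !adjE !mxE; cb3; field.
  by rewrite e c2 c3 [RHS]mxE; field.
Qed.

Definition Gm : 'M[C]_2 :=
  \matrix_(a, b) (match nat_of_ord a, nat_of_ord b with 0, 1 => -1/2 | _, _ => 1/2 end).

Lemma G_E : adj QS *m QT = Gm.
Proof.
apply/matrixP => a b; rewrite mulE4 !adjE !QSC !mxE; c2 a; c2 b; cb3; field; done.
Qed.

Lemma GC a b : (Gm a b)^* = Gm a b.
Proof. rewrite mxE; c2 a; c2 b; cfix. Qed.

Lemma GG : Gm *m adj Gm = (1/2)%:M.
Proof.
apply/matrixP => a b; rewrite mulE2 !adjE !GC !mxE eq_ordE.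
c2 a; c2 b; cb3; rewrite ?mulr1n ?mulr0n; field; done.
Qed.

Lemma jordan : all_jordan_angles_equal (supp (rho1 p)) (supp (rho2 p)).
Proof.
exists 2%N, QS, QT; split; first by split; [exact: QS_onb | exact: supp1].
split; first by split; [exact: QT_onb | exact: supp2].
exists (1/2); rewrite G_E GG char_poly_trig ?scalar_mx_is_trig //.
by rewrite big_ord_recl big_ord1 !mxE !eqxx !mulr1n expr2.
Qed.
End Ex.

Unset Implicit Arguments.

Theorem mainTheorem9 (R : realType) (p : R) (hp0 : 0 < p) (hp1 : p < 1 / 2) :
  char_poly (rho1 p) = char_poly (rho2 p) /\
  all_jordan_angles_equal (supp (rho1 p)) (supp (rho2 p)) /\
  ~ essentially_pure (fun rho => rho = rho1 p \/ rho = rho2 p).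
Proof.
split; first exact: charE.
split; first exact: (jordan hp0 hp1).
exact: (not_ep hp0 hp1).
Qed.
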